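(* Let $p,q\geq 2$ be relatively prime integers, let $k\geq 2$ and $t>0$ be integers, and let $w_1,w_2\in A_{pq}^k$. Then (1) if $\mathrm{int}(w_1)<q^t$ then $\mathrm{int}(G_{p,q}(w_1))<q^{t-1}$; and (2) if $\mathrm{int}(w_2)\equiv\mathrm{int}(w_1)+q^t\pmod{(pq)^k}$ then $\mathrm{int}(G_{p,q}(w_2))\equiv\mathrm{int}(G_{p,q}(w_1))+q^{t-1}\pmod{(pq)^{k-1}}$.
   Context: For an integer $n>1$, $A_n=\{0,\dots,n-1\}$, and $A_n^k$ is the set of words of length $k$. Define $g_{p,q}:A_{pq}\times A_{pq}\to A_{pq}$ by writing $x=x_1q+x_0$, $y=y_1q+y_0$ with $x_0,y_0\in A_q$, $x_1,y_1\in A_p$ (uniquely), and $g_{p,q}(x,y)=x_0p+y_1$. For a word $w=w(1)\cdots w(m)$ with $m\geq2$, $G_{p,q}(w)=u(1)\cdots u(m-1)$ where $u(i)=g_{p,q}(w(i),w(i+1))$. For a nonempty word $w=w(1)\cdots w(m)$ over $A_{pq}$, $\mathrm{int}(w)=\sum_{i=0}^{m-1}w(m-i)(pq)^i$. *)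

(* Defs.v *)
From mathcomp Require Import all_boot.
Set Implicit Arguments. Unset Strict Implicit. Unset Printing Implicit Defensive.

Definition word_over (n : nat) (w : seq nat) : bool := all (fun a => a < n) w.

(* g_{p,q}(x,y) = x_0 p + y_1 where x = x_1 q + x_0, y = y_1 q + y_0, x_0,y_0 < q *)
Definition g (p q x y : nat) : nat := (x %% q) * p + y %/ q.

(* G_{p,q}(w(1)...w(m)) = u(1)...u(m-1), u(i) = g(w(i), w(i+1)) *)
Definition G (p q : nat) (w : seq nat) : seq nat :=
  pairmap (g p q) (head 0 w) (behead w).

(* int(w) = sum_{i=0}^{m-1} w(m-i) (pq)^i  (base-pq value, most significant first) *)
Definition int_of (p q : nat) (w : seq nat) : nat :=
  foldl (fun acc a => acc * (p * q) + a) 0 w.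

(* Main.v *)
Require Import Defs.
From mathcomp Require Import all_boot.
From mathcomp Require Import zify.

Lemma pairmap_rcons' (f : nat -> nat -> nat) x s a :
  pairmap f x (rcons s a) = rcons (pairmap f x s) (f (last x s) a).
Proof. by elim: s x => [|y s IH] x //=; rewrite IH. Qed.

Lemma int_rcons p q s a : int_of p q (rcons s a) = int_of p q s * (p * q) + a.
Proof. by rewrite /int_of foldl_rcons. Qed.

Lemma G_rcons2 p q s b a :
  G p q (rcons (rcons s b) a) = rcons (G p q (rcons s b)) (g p q b a).
Proof.
case: s => [|x s] //=.
by rewrite /G /= pairmap_rcons' last_rcons.
Qed.

Lemma int_lt p q w : 0 < p * q -> all (fun a => a < p * q) w ->
  int_of p q w < (p * q) ^ size w.
Proof.
move=> hN; elim/last_ind: w => [|s a IH] //=.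
rewrite all_rcons size_rcons int_rcons => /andP [ha hs].
have := IH hs => hi.
rewrite expnSr.
have : int_of p q s * (p * q) + a < (int_of p q s).+1 * (p * q).
  by rewrite mulSn addnC ltn_add2r.
move=> h; apply: (leq_trans h); by rewrite leq_mul2r hi orbT.
Qed.

Lemma mod_shift x c N j : c < N ->
  (x * N + c) %% N ^ j.+1 = (x %% N ^ j) * N + c.
Proof.
move=> hc.
rewrite {1}(divn_eq x (N ^ j)) mulnDl -mulnA -expnSr -addnA modnMDl.
apply: modn_small.
have hN : 0 < N by apply: leq_ltn_trans hc.
have hm : x %% N ^ j < N ^ j by rewrite ltn_mod expn_gt0 hN.
rewrite expnSr.
have : x %% N ^ j * N + c < (x %% N ^ j).+1 * N by rewrite mulSn addnC ltn_add2r.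
move=> h; apply: (leq_trans h); by rewrite leq_mul2r hm orbT.
Qed.

Lemma key p q w : 0 < p -> 0 < q -> all (fun a => a < p * q) w -> 0 < size w ->
  int_of p q (G p q w) = (int_of p q w %/ q) %% (p * q) ^ (size w).-1.
Proof.
move=> hp hq; elim/last_ind: w => [|s a IH] //=.
rewrite all_rcons size_rcons /= => /andP [ha hs] _.
case/lastP: s IH hs => [|s b] IH hs.
  by rewrite /= modn1.
rewrite G_rcons2 int_rcons IH // ?size_rcons // int_rcons.
rewrite ?size_rcons /=.
set Y := int_of p q s * (p * q) + b.
have ha' : a %/ q < p by rewrite ltn_divLR // mulnC.
have hbq : b %% q < q by rewrite ltn_mod.
have hY : Y = (Y %/ q) * q + b %% q.
  rewrite {1}(divn_eq Y q); congr (_ + _).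
  by rewrite /Y mulnA modnMDl.
have e : (Y * (p * q) + a) %/ q = (Y %/ q) * (p * q) + ((b %% q) * p + a %/ q).
  rewrite {1}hY.
  have -> : (Y %/ q * q + b %% q) * (p * q) + a = (Y %/ q * (p * q) + b %% q * p) * q + a.
    by rewrite !mulnDl -(mulnA (Y %/ q) q) (mulnC q (p * q)) !mulnA.
  by rewrite divnMDl // addnA.
rewrite !int_rcons -/Y e mod_shift /g //.
have h1 : b %% q * p + a %/ q < b %% q * p + p by rewrite ltn_add2l.
apply: (leq_trans h1); rewrite -mulSnr mulnC leq_mul2l hbq orbT //.
Qed.

Theorem lemma9 (p q k t : nat) (w1 w2 : seq nat) :
  2 <= p -> 2 <= q -> coprime p q -> 2 <= k -> 0 < t ->
  size w1 = k -> size w2 = k ->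
  word_over (p * q) w1 -> word_over (p * q) w2 ->
  (int_of p q w1 < q ^ t -> int_of p q (G p q w1) < q ^ t.-1) /\
  (int_of p q w2 = int_of p q w1 + q ^ t %[mod (p * q) ^ k] ->
   int_of p q (G p q w2) = int_of p q (G p q w1) + q ^ t.-1 %[mod (p * q) ^ k.-1]).
Proof.
move=> hp2 hq2 _ hk ht s1 s2 o1 o2.
have hp : 0 < p by apply: leq_trans hp2.
have hq : 0 < q by apply: leq_trans hq2.
have hN : 0 < p * q by rewrite muln_gt0 hp hq.
have hk0 : 0 < k by apply: leq_trans hk.
have eqt : q ^ t = q ^ t.-1 * q by rewrite -expnSr prednK.
rewrite !key // ?s1 ?s2 //.
split.
  move=> h; apply: (leq_ltn_trans (leq_mod _ _)).
  by rewrite ltn_divLR // -eqt.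
set X1 := int_of p q w1; set X2 := int_of p q w2; set M := (p * q) ^ k.-1.
move=> H.
have hX2 : X2 < (p * q) ^ k by rewrite /X2 -s2 int_lt.
set j := (X1 + q ^ t) %/ (p * q) ^ k.
have E : X1 + q ^ t = j * (p * q) ^ k + X2.
  by rewrite {1}(divn_eq (X1 + q ^ t) ((p * q) ^ k)) -H modn_small.
have EN : (p * q) ^ k = (p * M) * q.
  by rewrite /M -(prednK hk0) expnS /= -!mulnA (mulnC q).
have E2 : X1 %/ q + q ^ t.-1 = j * p * M + X2 %/ q.
  rewrite -(mulnK (q ^ t.-1) hq) -eqt -divnDr; last by rewrite eqt dvdn_mull.
  by rewrite E EN !mulnA divnMDl.
by rewrite modn_mod modnDml E2 modnMDl.
Qed.
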